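(* Let $G\in\mathcal{C}$ be different from the $4$-cycle, and let $C_1$ and $C_2$ be its two $4$-faces. Then $G$ is $(C_1\cup C_2)$-critical; moreover, a precoloring of $C_1\cup C_2$ in which, for each $i\in\{1,2\}$, the two vertices of $C_i$ of degree two in $G$ receive different colors does not extend to a proper $3$-coloring of $G$.
   Context: $\mathcal{C}$ is the class of plane graphs obtained from a cycle of length $4$ by finitely many repetitions of the following operation: given a graph whose outer face is $v_1v_2v_3v_4$ with $v_1$ and $v_3$ of degree two, add new vertices $v_2',v_3',v_4'$ and edges $v_1v_2', v_2'v_3', v_3'v_4', v_4'v_1, v_3v_3'$, and let $v_1v_2'v_3'v_4'$ be the new outer face. Each graph of $\mathcal{C}$ has two $4$-faces. All colorings are proper $3$-colorings. For a graph $G$ and subgraph $S\subseteq G$, $G$ is $S$-critical if for every proper subgraph $G''\subsetneq G$ with $S\subseteq G''$ there exists a coloring of $S$ that extends to a coloring of $G''$ but not to a coloring of $G$. *)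

(* Defs.v *)
From mathcomp Require Import all_boot.
Set Implicit Arguments. Unset Strict Implicit. Unset Printing Implicit Defensive.

(* A graph whose vertices are natural numbers: a (finite) list of vertices
   and an edge relation (intended symmetric, loopless, between listed vertices). *)
Record graph := Graph { gV : seq nat; gE : rel nat }.

Definition mkE (es : seq (nat * nat)) : rel nat :=
  fun x y => ((x, y) \in es) || ((y, x) \in es).

Definition deg (g : graph) (x : nat) : nat :=
  size [seq y <- undup (gV g) | gE g x y].

Definition quad := (nat * nat * nat * nat)%type.
Definition qverts (q : quad) : seq nat :=
  let: (a, b, c, d) := q in [:: a; b; c; d].

Definition cycleG (q : quad) : graph :=
  let: (a, b, c, d) := q in
  Graph [:: a; b; c; d] (mkE [:: (a, b); (b, c); (c, d); (d, a)]).

Definition gunion (g h : graph) : graph :=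
  Graph (gV g ++ gV h) (fun x y => gE g x y || gE h x y).

Definition subgraph (H G : graph) : Prop :=
  [/\ {subset gV H <= gV G},
      (forall x y, gE H x y -> gE G x y),
      (forall x y, gE H x y -> (x \in gV H) && (y \in gV H)),
      (forall x y, gE H x y = gE H y x) &
      (forall x, gE H x x = false)].

Definition same_graph (H G : graph) : Prop :=
  gV H =i gV G /\ (forall x y, gE H x y = gE G x y).

Definition proper_col (g : graph) (c : nat -> 'I_3) : Prop :=
  forall x y, gE g x y -> c x != c y.

Definition extends (S : graph) (c : nat -> 'I_3) (G : graph) : Prop :=
  exists c' : nat -> 'I_3, proper_col G c' /\ (forall x, x \in gV S -> c' x = c x).

Definition critical (G S : graph) : Prop :=
  forall H, subgraph H G -> subgraph S H -> ~ same_graph H G ->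
    exists c : nat -> 'I_3, proper_col S c /\ extends S c H /\ ~ extends S c G.

(* The class C: inC n G c1 c2 means G is obtained from a 4-cycle c1 by n
   applications of the operation, with current outer face c2. *)
Inductive inC : nat -> graph -> quad -> quad -> Prop :=
| inC_base a b c d :
    uniq [:: a; b; c; d] ->
    inC 0 (cycleG (a, b, c, d)) (a, b, c, d) (a, b, c, d)
| inC_step n G c1 o1 o2 o3 o4 v1 v3 x y z :
    inC n G c1 (o1, o2, o3, o4) ->
    (v1, v3) \in [:: (o1, o3); (o3, o1); (o2, o4); (o4, o2)] ->
    deg G v1 = 2 -> deg G v3 = 2 ->
    uniq [:: x; y; z] ->
    x \notin gV G -> y \notin gV G -> z \notin gV G ->
    inC n.+1
      (Graph (x :: y :: z :: gV G)
         (fun u w => gE G u w ||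
            mkE [:: (v1, x); (x, y); (y, z); (z, v1); (v3, y)] u w))
      c1 (v1, x, y, z).

(* Main.v *)
Require Import Defs.
From mathcomp Require Import all_boot zify.
From Stdlib Require Import Classical.
Set Implicit Arguments. Unset Strict Implicit. Unset Printing Implicit Defensive.

Definition ok5 (m : nat) (a x y z b : 'I_3) : bool :=
  [&& (m == 0) || (a != x), (m == 1) || (x != y), (m == 2) || (y != z),
      (m == 3) || (z != a) & (m == 4) || (b != y)].
Definition o0 : 'I_3 := @Ordinal 3 0 isT.
Definition o1 : 'I_3 := @Ordinal 3 1 isT.
Definition o2 : 'I_3 := @Ordinal 3 2 isT.
Ltac pick3 T := first [exists o0; T | exists o1; T | exists o2; T].
Lemma fin_step (m : nat) (a b : 'I_3) : m <= 5 ->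
   exists x y z, ok5 m a x y z b && (((m == 5) && (a == b)) || (x != z)).
Proof.
case: a => [[|[|[|//]]] Ha]; case: b => [[|[|[|//]]] Hb];
(do 6? [case: m => [|m]]) => // _;
pick3 ltac:(pick3 ltac:(pick3 ltac:(by []))).
Qed.
Lemma fin_forced (a x y z : 'I_3) :
  a != x -> x != y -> y != z -> z != a -> a != y -> x = z.
Proof.
case: a x y z => [a ?] [x ?] [y ?] [z ?].
rewrite -!(inj_eq val_inj) /= => *; apply/val_inj => /=; lia.
Qed.
Lemma fin3 (a b c d : 'I_3) : a != b -> c != a -> c != b -> d != a -> d != b -> c = d.
Proof.
case: a b c d => [a ?] [b ?] [c ?] [d ?].
rewrite -!(inj_eq val_inj) /= => *; apply/val_inj => /=; lia.
Qed.

Lemma count2 (s : seq nat) a b : uniq s -> a != b -> a \in s -> b \in s ->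
  count (fun y => (y == a) || (y == b)) s = 2.
Proof.
move=> us ab ia ib.
have := count_predUI (pred1 a) (pred1 b) s.
rewrite !count_uniq_mem // ia ib.
rewrite (@eq_count _ (predI _ _) pred0); last first.
  by move=> t /=; case: eqP => // ->; rewrite (negbTE ab).
by rewrite count_pred0 addn0.
Qed.

Lemma count3 (s : seq nat) a b c : uniq s -> a != b -> a != c -> b != c ->
  a \in s -> b \in s -> c \in s ->
  count (fun y => (y == a) || ((y == b) || (y == c))) s = 3.
Proof.
move=> us ab ac bc ia ib ic.
have := count_predUI (pred1 a) (fun y => (y == b) || (y == c)) s.
rewrite count_uniq_mem // ia count2 //.
rewrite (@eq_count _ (predI _ _) pred0); last first.
  by move=> t /=; case: eqP => // ->; rewrite (negbTE ab) (negbTE ac).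
by rewrite count_pred0 addn0.
Qed.

Lemma deg_two (G : graph) x a b : uniq (gV G) ->
  (forall t, gE G x t = (t == a) || (t == b)) -> a != b ->
  a \in gV G -> b \in gV G -> deg G x = 2.
Proof.
move=> u hx ab ia ib; rewrite /deg undup_id // size_filter.
by rewrite (eq_count hx) count2.
Qed.

Lemma deg_ge3 (G : graph) x a b c : uniq (gV G) ->
  gE G x a -> gE G x b -> gE G x c -> a != b -> a != c -> b != c ->
  a \in gV G -> b \in gV G -> c \in gV G -> deg G x != 2.
Proof.
move=> u ea eb ec ab ac bc ia ib ic; rewrite /deg undup_id // size_filter.
have : count (fun y => (y == a) || ((y == b) || (y == c))) (gV G) <= count (gE G x) (gV G).
  by apply: sub_count => t /=; case/or3P => /eqP ->.
by rewrite count3 //; case: count => [|[|[|]]].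
Qed.

Definition es5 (v1 v3 x y z : nat) := [:: (v1, x); (x, y); (y, z); (z, v1); (v3, y)].
Definition extG (G : graph) (v1 v3 x y z : nat) : graph :=
  Graph (x :: y :: z :: gV G) (fun u w => gE G u w || mkE (es5 v1 v3 x y z) u w).
Definition upd (c : nat -> 'I_3) (x y z : nat) (cx cy cz : 'I_3) (t : nat) : 'I_3 :=
  if t == x then cx else if t == y then cy else if t == z then cz else c t.
Definition exc (e1 e2 u w : nat) : bool := ((u == e1) && (w == e2)) || ((u == e2) && (w == e1)).
Definition PE (G : graph) (c : nat -> 'I_3) e1 e2 :=
  forall u w, gE G u w -> ~~ exc e1 e2 u w -> c u != c w.

Lemma fresh_neq (V : seq nat) t v : t \in V -> v \notin V -> (t == v) = false /\ (v == t) = false.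
Proof. move=> ht hv; have tv : t != v by apply: contraNneq hv => <-. by rewrite (negbTE tv) eq_sym (negbTE tv). Qed.

Lemma upd_old c x y z cx cy cz t : t != x -> t != y -> t != z -> upd c x y z cx cy cz t = c t.
Proof. by move=> /negbTE hx /negbTE hy /negbTE hz; rewrite /upd hx hy hz. Qed.

Lemma ext_ok (V : seq nat) v1 v3 x y z (c : nat -> 'I_3) m cx cy cz :
  v1 \in V -> v3 \in V -> uniq [:: x; y; z] -> x \notin V -> y \notin V -> z \notin V ->
  ok5 m (c v1) cx cy cz (c v3) ->
  forall u w, mkE (es5 v1 v3 x y z) u w ->
  (m == 5) || ~~ (((u, w) == nth (0, 0) (es5 v1 v3 x y z) m) || ((w, u) == nth (0, 0) (es5 v1 v3 x y z) m)) ->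
  upd c x y z cx cy cz u != upd c x y z cx cy cz w.
Proof.
move=> i1 i3 uxyz nx ny nz hok.
have [n1x n1x'] := fresh_neq i1 nx; have [n1y n1y'] := fresh_neq i1 ny; have [n1z n1z'] := fresh_neq i1 nz.
have [n3x n3x'] := fresh_neq i3 nx; have [n3y n3y'] := fresh_neq i3 ny; have [n3z n3z'] := fresh_neq i3 nz.
move: uxyz; rewrite /= !inE negb_or andbT => /andP[/andP[nxy nxz] nyz].
have ux : upd c x y z cx cy cz x = cx by rewrite /upd eqxx.
have uy : upd c x y z cx cy cz y = cy by rewrite /upd eq_sym (negbTE nxy) eqxx.
have uz : upd c x y z cx cy cz z = cz by rewrite /upd eq_sym (negbTE nxz) eq_sym (negbTE nyz) eqxx.
have u1 : upd c x y z cx cy cz v1 = c v1 by rewrite /upd n1x n1y n1z.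
have u3 : upd c x y z cx cy cz v3 = c v3 by rewrite /upd n3x n3y n3z.
have okj : forall j, j < 5 -> j != m ->
    upd c x y z cx cy cz (nth (0,0) (es5 v1 v3 x y z) j).1 != upd c x y z cx cy cz (nth (0,0) (es5 v1 v3 x y z) j).2.
  move: hok; rewrite /ok5 => /and5P[h0 h1 h2 h3 h4].
  case=> [|[|[|[|[|//]]]]] _ /= hj.
  - by rewrite u1 ux; move: h0; rewrite eq_sym (negbTE hj).
  - by rewrite ux uy; move: h1; rewrite eq_sym (negbTE hj).
  - by rewrite uy uz; move: h2; rewrite eq_sym (negbTE hj).
  - by rewrite uz u1; move: h3; rewrite eq_sym (negbTE hj).
  - by rewrite u3 uy; move: h4; rewrite eq_sym (negbTE hj).
move=> u w; rewrite /mkE => /orP[] hin hm.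
- have hj : index (u, w) (es5 v1 v3 x y z) < 5 by rewrite -[5]/(size (es5 v1 v3 x y z)) index_mem.
  have hn := nth_index (0,0) hin.
  move: (index _ _) hj hn => j hj hn.
  have := okj _ hj; rewrite hn /=; apply.
  apply/negP => /eqP hjm; move: hm; rewrite -hjm hn eqxx /= orbF => /eqP i5.
  by move: hj; rewrite i5.
- have hj : index (w, u) (es5 v1 v3 x y z) < 5 by rewrite -[5]/(size (es5 v1 v3 x y z)) index_mem.
  have hn := nth_index (0,0) hin.
  move: (index _ _) hj hn => j hj hn.
  rewrite eq_sym; have := okj _ hj; rewrite hn /=; apply.
  apply/negP => /eqP hjm; move: hm; rewrite -hjm hn eqxx orbT /= orbF => /eqP i5.
  by move: hj; rewrite i5.
Qed.

Record Inv (G : graph) (C1 : quad) (p q r s u1 u2 w1 w2 : nat) : Prop := {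
 iu : uniq (gV G);
 ie : forall a b, gE G a b -> (a \in gV G) && (b \in gV G);
 isym : forall a b, gE G a b = gE G b a;
 inb : forall a, a \in gV G -> exists b, gE G a b;
 ipq : uniq [:: p; q; r; s];
 ivp : p \in gV G; ivq : q \in gV G; ivr : r \in gV G; ivs : s \in gV G;
 ieq : forall t, gE G q t = (t == p) || (t == r);
 ies : forall t, gE G s t = (t == p) || (t == r);
 ier : exists t, [/\ gE G r t, t != q & t != s];
 iU1 : u1 \in qverts C1; iU2 : u2 \in qverts C1; iUn : u1 != u2;
 iUV1 : u1 \in gV G; iUV2 : u2 \in gV G;
 iWn : w1 != w2; iW1 : w1 \in gV G; iW2 : w2 \in gV G;
 iN1 : forall t, gE G u1 t = (t == w1) || (t == w2);
 iN2 : forall t, gE G u2 t = (t == w1) || (t == w2);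
 iD : [&& u1 != q, u1 != s, u2 != q & u2 != s];
 iF : forall c, proper_col G c -> c u1 != c u2 -> c q = c s;
 iB : forall e1 e2, gE G e1 e2 -> ~~ gE (cycleG C1) e1 e2 ->
        exists c, [/\ PE G c e1 e2, c u1 != c u2 & c q != c s];
 iG : exists c, proper_col G c /\ c u1 != c u2 }.

Lemma mkE5 v1 v3 x y z u w : mkE (es5 v1 v3 x y z) u w =
  [|| (u == v1) && (w == x), (u == x) && (w == y), (u == y) && (w == z),
      (u == z) && (w == v1), (u == v3) && (w == y),
      (w == v1) && (u == x), (w == x) && (u == y), (w == y) && (u == z),
      (w == z) && (u == v1) | (w == v3) && (u == y)].
Proof. by rewrite /mkE !in_cons in_nil !xpair_eqE !orbF -!orbA. Qed.

Lemma core (G : graph) (C1 : quad) v1 v3 x y z u1 u2 w1 w2 :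
  uniq (gV G) ->
  (forall a b, gE G a b -> (a \in gV G) && (b \in gV G)) ->
  (forall a b, gE G a b = gE G b a) ->
  (forall a, a \in gV G -> exists b, gE G a b) ->
  v1 \in gV G -> v3 \in gV G -> v1 != v3 ->
  u1 \in qverts C1 -> u2 \in qverts C1 -> u1 != u2 -> u1 \in gV G -> u2 \in gV G ->
  w1 != w2 -> w1 \in gV G -> w2 \in gV G ->
  (forall t, gE G u1 t = (t == w1) || (t == w2)) ->
  (forall t, gE G u2 t = (t == w1) || (t == w2)) ->
  u1 != v1 -> u1 != v3 -> u2 != v1 -> u2 != v3 ->
  (forall c, proper_col G c -> c u1 != c u2 -> c v1 = c v3) ->
  (forall e1 e2, gE G e1 e2 -> ~~ gE (cycleG C1) e1 e2 ->
     exists c, [/\ PE G c e1 e2, c u1 != c u2 & c v1 != c v3]) ->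
  (exists c, proper_col G c /\ c u1 != c u2) ->
  uniq [:: x; y; z] -> x \notin gV G -> y \notin gV G -> z \notin gV G ->
  Inv (extG G v1 v3 x y z) C1 v1 x y z u1 u2 w1 w2.
Proof.
move=> U E S N i1 i3 n13 iu1 iu2 nu iv1 iv2 nw iw1 iw2 N1 N2 d11 d13 d21 d23 F B Gc uxyz nx ny nz.
have [n1x n1x'] := fresh_neq i1 nx; have [n1y n1y'] := fresh_neq i1 ny; have [n1z n1z'] := fresh_neq i1 nz.
have [n3x n3x'] := fresh_neq i3 nx; have [n3y n3y'] := fresh_neq i3 ny; have [n3z n3z'] := fresh_neq i3 nz.
have [m1x m1x'] := fresh_neq iv1 nx; have [m1y m1y'] := fresh_neq iv1 ny; have [m1z m1z'] := fresh_neq iv1 nz.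
have [m2x m2x'] := fresh_neq iv2 nx; have [m2y m2y'] := fresh_neq iv2 ny; have [m2z m2z'] := fresh_neq iv2 nz.
have uxyz' := uxyz.
move: uxyz'; rewrite /= !inE negb_or andbT => /andP[/andP[nxy nxz] nyz].
have [xy yx] : (x == y) = false /\ (y == x) = false by rewrite (negbTE nxy) eq_sym (negbTE nxy).
have [xz zx] : (x == z) = false /\ (z == x) = false by rewrite (negbTE nxz) eq_sym (negbTE nxz).
have [yz zy] : (y == z) = false /\ (z == y) = false by rewrite (negbTE nyz) eq_sym (negbTE nyz).
have Ex : forall t, gE G x t = false.
  by move=> t; apply/negbTE/negP => hh; have /andP[] := E _ _ hh; rewrite (negbTE nx).
have Ey : forall t, gE G y t = false.
  by move=> t; apply/negbTE/negP => hh; have /andP[] := E _ _ hh; rewrite (negbTE ny).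
have Ez : forall t, gE G z t = false.
  by move=> t; apply/negbTE/negP => hh; have /andP[] := E _ _ hh; rewrite (negbTE nz).
have inV : forall t, t \in gV G -> t \in gV (extG G v1 v3 x y z).
  by move=> t ht; rewrite /= !inE ht !orbT.
have e1x : mkE (es5 v1 v3 x y z) v1 x by rewrite mkE5 !eqxx.
have exy : mkE (es5 v1 v3 x y z) x y by rewrite mkE5 !eqxx orbT.
have eyz : mkE (es5 v1 v3 x y z) y z by rewrite mkE5 !eqxx !orbT.
have ez1 : mkE (es5 v1 v3 x y z) z v1 by rewrite mkE5 !eqxx !orbT.
have e3y : mkE (es5 v1 v3 x y z) v3 y by rewrite mkE5 !eqxx !orbT.
have Sm : forall a b, mkE (es5 v1 v3 x y z) a b = mkE (es5 v1 v3 x y z) b a.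
  by move=> a b; rewrite /mkE orbC.
have restr : forall c, proper_col (extG G v1 v3 x y z) c -> proper_col G c.
  by move=> c pc a b hab; apply: pc; rewrite /= hab.
have updV : forall c cx cy cz t, t \in gV G -> upd c x y z cx cy cz t = c t.
  move=> c cx cy cz t ht; rewrite /upd; have [-> _] := fresh_neq ht nx; have [-> _] := fresh_neq ht ny.
  by have [-> _] := fresh_neq ht nz.
constructor.
- by rewrite /= !inE !negb_or xy xz yz nx ny nz U.
- move=> a b /= /orP[hab|].
    by have /andP[ha hb] := E _ _ hab; rewrite !inE ha hb !orbT.
  rewrite mkE5 => /or4P[|||/or4P[|||/or4P[|||]]] /andP[/eqP -> /eqP ->];
    by rewrite !inE ?eqxx ?i1 ?i3 ?orbT.
- by move=> a b /=; rewrite S Sm.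
- move=> a; rewrite /= !inE => /or4P[/eqP->|/eqP->|/eqP->|/N [b hb]].
  + by exists y; rewrite exy orbT.
  + by exists x; rewrite Sm exy orbT.
  + by exists y; rewrite Sm eyz orbT.
  + by exists b; rewrite hb.
- by rewrite /= !inE !negb_or n1x n1y n1z xy xz yz.
- exact: inV.
- by rewrite /= !inE eqxx.
- by rewrite /= !inE eqxx orbT.
- by rewrite /= !inE eqxx !orbT.
- move=> t /=; rewrite Ex mkE5 n1x' xy xz n3x' !eqxx /= !andbF !andbT /= !orbF.
  by rewrite orbC.
- move=> t /=; rewrite Ez mkE5 n1z' zx zy n3z' !eqxx /= !andbF !andbT /= !orbF.
  by rewrite orbC.
- by exists v3; rewrite /= Ey Sm e3y n3x n3z.
- exact: iu1.
- exact: iu2.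
- exact: nu.
- exact: inV.
- exact: inV.
- exact: nw.
- exact: inV.
- exact: inV.
- move=> t /=; rewrite N1 mkE5 (negbTE d11) (negbTE d13) m1x m1y m1z /= !andbF /= !orbF.
  by [].
- move=> t /=; rewrite N2 mkE5 (negbTE d21) (negbTE d23) m2x m2y m2z /= !andbF /= !orbF.
  by [].
- by rewrite -!(eq_sym x) -!(eq_sym z) m1x' m1z' m2x' m2z'.
- move=> c pc cu.
  have h13 := F c (restr c pc) cu.
  have P : forall a b, mkE (es5 v1 v3 x y z) a b -> c a != c b.
    by move=> a b hab; apply: pc; rewrite /= hab orbT.
  apply: (@fin_forced (c v1)).
  + exact: P e1x.
  + exact: P exy.
  + exact: P eyz.
  + exact: P ez1.
  + by rewrite h13; apply: P e3y.
- move=> e1 e2 /= /orP[old nC|new nC].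
  + have [c [pe cu cv]] := B e1 e2 old nC.
    have [cx [cy [cz /andP[ok hxz]]]] := @fin_step 5 (c v1) (c v3) (leqnn 5).
    rewrite eqxx (negbTE cv) /= in hxz.
    exists (upd c x y z cx cy cz); split.
    * move=> a b /= /orP[hab|hab] hne.
        have /andP[ha hb] := E _ _ hab.
        by rewrite !updV //; apply: pe.
      by apply: (ext_ok i1 i3 uxyz nx ny nz ok hab); rewrite eqxx.
    * by rewrite !updV.
    * by rewrite /upd eqxx zx zy eqxx.
  + have [c [pc cu]] := Gc.
    pose m := if (e1, e2) \in es5 v1 v3 x y z then index (e1, e2) (es5 v1 v3 x y z)
              else index (e2, e1) (es5 v1 v3 x y z).
    have [hm5 hnth] : m < 5 /\ ((nth (0,0) (es5 v1 v3 x y z) m == (e1, e2)) ||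
                               (nth (0,0) (es5 v1 v3 x y z) m == (e2, e1))).
      rewrite /m; case: ifP => hin.
        by rewrite -[5]/(size (es5 v1 v3 x y z)) index_mem hin nth_index ?eqxx.
      move: new; rewrite /mkE hin orFb => hin'.
      by rewrite -[5]/(size (es5 v1 v3 x y z)) index_mem hin' nth_index ?eqxx ?orbT.
    have [cx [cy [cz /andP[ok hxz]]]] := @fin_step m (c v1) (c v3) (ltnW hm5).
    have m5 : (m == 5) = false by apply/negbTE; move: hm5; apply: contraTneq => ->.
    rewrite m5 /= in hxz.
    exists (upd c x y z cx cy cz); split.
    * move=> a b /= /orP[hab|hab] hne.
        have /andP[ha hb] := E _ _ hab.
        by rewrite !updV //; apply: pc.
      apply: (ext_ok i1 i3 uxyz nx ny nz ok hab); rewrite m5 /=.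
      move: hne; rewrite /exc; apply: contra.
      by case/orP: hnth => /eqP ->; rewrite !xpair_eqE; case/orP => /andP[-> ->]; rewrite ?orbT.
    * by rewrite !updV.
    * by rewrite /upd eqxx zx zy eqxx.
- have [c [pc cu]] := Gc.
  have [cx [cy [cz /andP[ok _]]]] := @fin_step 5 (c v1) (c v3) (leqnn 5).
  exists (upd c x y z cx cy cz); split; last by rewrite !updV.
  move=> a b /= /orP[hab|hab].
    have /andP[ha hb] := E _ _ hab.
    by rewrite !updV //; apply: pc.
  by apply: (ext_ok i1 i3 uxyz nx ny nz ok hab); rewrite eqxx.
Qed.

Lemma neq2 (a b : nat) : a != b -> (a == b) = false /\ (b == a) = false.
Proof. by move=> h; rewrite (negbTE h) eq_sym (negbTE h). Qed.

Lemma step_inv G C1 p q r s u1 u2 w1 w2 v1 v3 x y z :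
  Inv G C1 p q r s u1 u2 w1 w2 ->
  (v1, v3) \in [:: (p, r); (r, p); (q, s); (s, q)] -> deg G v1 = 2 -> deg G v3 = 2 ->
  uniq [:: x; y; z] -> x \notin gV G -> y \notin gV G -> z \notin gV G ->
  Inv (extG G v1 v3 x y z) C1 v1 x y z u1 u2 w1 w2.
Proof.
move=> I hv d1 d3 uxyz nx ny nz.
have P4 := ipq I; move: P4; rewrite /= !inE !negb_or => /and4P[/and3P[npq npr nps] /andP[nqr nqs] nrs _].
have dr : deg G r != 2.
  have [t [rt tq ts]] := ier I.
  have /andP[_ tV] := ie I rt.
  apply: (@deg_ge3 G r q s t (iu I)) => //.
  - by rewrite (isym I) (ieq I) eqxx orbT.
  - by rewrite (isym I) (ies I) eqxx orbT.
  - by rewrite eq_sym.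
  - by rewrite eq_sym.
  - exact: ivq I.
  - exact: ivs I.
have /and4P[a1 a2 a3 a4] := iD I.
move: hv; rewrite !inE !xpair_eqE => /or4P[] /andP[/eqP e1 /eqP e3]; subst v1 v3.
- by move: dr; rewrite d3.
- by move: dr; rewrite d1.
- apply: core => //; try exact: (iu I); try exact: (ie I); try exact: (isym I);
  try exact: (inb I); try exact: (ivq I); try exact: (ivs I); try exact: (iU1 I);
  try exact: (iU2 I); try exact: (iUn I); try exact: (iUV1 I); try exact: (iUV2 I);
  try exact: (iWn I); try exact: (iW1 I); try exact: (iW2 I); try exact: (iN1 I);
  try exact: (iN2 I); try exact: (iF I); try exact: (iB I); try exact: (iG I).
- apply: core => //; try exact: (iu I); try exact: (ie I); try exact: (isym I);
  try exact: (inb I); try exact: (ivq I); try exact: (ivs I); try exact: (iU1 I);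
  try exact: (iU2 I); try exact: (iUn I); try exact: (iUV1 I); try exact: (iUV2 I);
  try exact: (iWn I); try exact: (iW1 I); try exact: (iW2 I); try exact: (iN1 I);
  try exact: (iN2 I); try exact: (iG I).
  + by rewrite eq_sym.
  + by move=> c pc cu; rewrite (iF I).
  + by move=> e1 e2 h1 h2; have [c [? ? ?]] := iB I h1 h2; exists c; split; rewrite // eq_sym.
Qed.

Lemma mkE4 a b c d s t : mkE [:: (a, b); (b, c); (c, d); (d, a)] s t =
  [|| (s == a) && (t == b), (s == b) && (t == c), (s == c) && (t == d),
      (s == d) && (t == a), (t == a) && (s == b), (t == b) && (s == c),
      (t == c) && (s == d) | (t == d) && (s == a)].
Proof. by rewrite /mkE !in_cons in_nil !xpair_eqE !orbF -!orbA. Qed.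

Lemma base_core (G : graph) C1 a b c d v1 v3 x y z :
  uniq (gV G) -> gV G =i [:: a; b; c; d] -> uniq [:: a; b; c; d] ->
  (forall s t, gE G s t = mkE [:: (a, b); (b, c); (c, d); (d, a)] s t) ->
  (forall s t, gE G s t -> gE (cycleG C1) s t) -> qverts C1 =i [:: a; b; c; d] ->
  (v1 == a) && (v3 == c) || (v1 == c) && (v3 == a) ->
  uniq [:: x; y; z] -> x \notin gV G -> y \notin gV G -> z \notin gV G ->
  Inv (extG G v1 v3 x y z) C1 v1 x y z b d a c.
Proof.
move=> U hV U4 hE hC hQ hv uxyz nx ny nz.
have U4' := U4; move: U4'; rewrite /= !inE !negb_or => /and4P[/and3P[nab nac nad] /andP[nbc nbd] ncd _].
have [ab ba] := neq2 nab; have [ac ca] := neq2 nac; have [ad da] := neq2 nad.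
have [bc cb] := neq2 nbc; have [bd db] := neq2 nbd; have [cd dc] := neq2 ncd.
have iV : forall t, (t \in gV G) = (t \in [:: a; b; c; d]) by move=> t; rewrite hV.
have [va vb vc vd] : [/\ a \in gV G, b \in gV G, c \in gV G & d \in gV G].
  by rewrite !iV !inE !eqxx !orbT.
have Nb : forall t, gE G b t = (t == a) || (t == c).
  move=> t; rewrite hE mkE4 ba bc bd !eqxx /= ?andbF ?andbT /= ?orbF.
  by case: (t == a); case: (t == c).
have Nd : forall t, gE G d t = (t == a) || (t == c).
  move=> t; rewrite hE mkE4 da db dc !eqxx /= ?andbF ?andbT /= ?orbF.
  by case: (t == a); case: (t == c).
have ea : forall t, gE G a t = (t == b) || (t == d).
  move=> t; rewrite hE mkE4 ab ac ad !eqxx /= ?andbF ?andbT /= ?orbF.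
  by case: (t == b); case: (t == d).
have ec : forall t, gE G c t = (t == b) || (t == d).
  move=> t; rewrite hE mkE4 ca cb cd !eqxx /= ?andbF ?andbT /= ?orbF.
  by case: (t == b); case: (t == d).
have Sy : forall s t, gE G s t = gE G t s by move=> s t; rewrite !hE /mkE orbC.
have hv' : [/\ v1 \in gV G, v3 \in gV G, v1 != v3, b != v1 & b != v3] /\
           [/\ d != v1, d != v3 & forall cl : nat -> 'I_3, cl a = cl c -> cl v1 = cl v3].
  case/orP: hv => /andP[/eqP -> /eqP ->]; (split; split; rewrite ?ba ?bc ?da ?dc ?ca ?ac //);
  by move=> cl h; rewrite h.
have [[i1 i3 n13 b1 b3] [d1 d3 clv]] := hv'.
apply: core => //.
- move=> s t; rewrite !iV hE mkE4.
  by case/or4P=> [|||/or4P[|||/orP[]]] /andP[/eqP -> /eqP ->]; rewrite !inE !eqxx ?orbT.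
- move=> s; rewrite iV !inE => /or4P[] /eqP ->.
  + by exists b; rewrite ea eqxx.
  + by exists a; rewrite Nb eqxx.
  + by exists b; rewrite ec eqxx.
  + by exists a; rewrite Nd eqxx.
- by rewrite hQ !inE eqxx orbT.
- by rewrite hQ !inE eqxx !orbT.
- move=> cl pc cbd; apply: clv.
  apply: (@fin3 (cl b) (cl d)) => //.
  + by apply: pc; rewrite ea eqxx.
  + by apply: pc; rewrite ea eqxx orbT.
  + by apply: pc; rewrite ec eqxx.
  + by apply: pc; rewrite ec eqxx orbT.
- by move=> e1 e2 /hC ->.
- exists (fun t => if (t == a) || (t == c) then o0 else if t == b then o1 else o2).
  split; last by rewrite ba bc eqxx /= da dc db.
  move=> s t; rewrite hE mkE4.
  by case/or4P=> [|||/or4P[|||/orP[]]] /andP[/eqP -> /eqP ->];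
    rewrite ?eqxx ?ab ?ac ?ad ?ba ?bc ?bd ?ca ?cb ?cd ?da ?db ?dc.
Qed.

Definition InvQ (G : graph) (C1 C2 : quad) : Prop :=
  let: (p, q, r, s) := C2 in exists u1 u2 w1 w2, Inv G C1 p q r s u1 u2 w1 w2.

Lemma inv_of n G C1 C2 : inC n G C1 C2 ->
  if n is 0 then [/\ G = cycleG C1, C2 = C1 & uniq (qverts C1)] else InvQ G C1 C2.
Proof.
move=> HH; elim: {n G C1 C2} HH => [a b c d U | n0 G C1' o1 o2 o3 o4 v1 v3 x y z H IH hv d1 d3 uxyz nx ny nz] //.
case: n0 H IH => [|n0] H IH.
- case: IH => eG ho U; subst G.
  case: C1' H ho U hv nx ny nz d1 d3 => [[[a b] c] d] H [-> -> -> ->] U hv nx ny nz d1 d3.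
  have rotE : forall s t, mkE [:: (b, c); (c, d); (d, a); (a, b)] s t =
                          mkE [:: (a, b); (b, c); (c, d); (d, a)] s t.
    by move=> s t; rewrite /mkE -[[:: (b, c); _; _; _]]/(rot 1 [:: (a, b); (b, c); (c, d); (d, a)]) !mem_rot.
  have rotV : forall t, (t \in [:: a; b; c; d]) = (t \in [:: b; c; d; a]).
    by move=> t; rewrite !inE; case: (t == a); rewrite ?orbT ?orbF.
  move: hv; rewrite !inE !xpair_eqE => /or4P[] hv.
  + exists b, d, a, c; apply: (@base_core _ _ a b c d) => //.
    by rewrite hv.
  + exists b, d, a, c; apply: (@base_core _ _ a b c d) => //.
    by rewrite hv orbT.
  + exists c, a, b, d; apply: (@base_core _ _ b c d a) => //.
    * by move: U; rewrite -(rot_uniq 1).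
    * by rewrite hv.
  + exists c, a, b, d; apply: (@base_core _ _ b c d a) => //.
    * by move: U; rewrite -(rot_uniq 1).
    * by rewrite hv orbT.
- have [u1 [u2 [w1 [w2 I]]]] := IH.
  exists u1, u2, w1, w2; exact: (step_inv I hv d1 d3 uxyz nx ny nz).
Qed.

Theorem mainTheorem7 (n : nat) (G : graph) (C1 C2 : quad) :
  inC n.+1 G C1 C2 ->
  critical G (gunion (cycleG C1) (cycleG C2)) /\
  (forall col : nat -> 'I_3,
     proper_col (gunion (cycleG C1) (cycleG C2)) col ->
     (forall u w, u \in qverts C1 -> w \in qverts C1 -> u != w ->
        deg G u = 2 -> deg G w = 2 -> col u != col w) ->
     (forall u w, u \in qverts C2 -> w \in qverts C2 -> u != w ->
        deg G u = 2 -> deg G w = 2 -> col u != col w) ->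
     ~ extends (gunion (cycleG C1) (cycleG C2)) col G).
Proof.
move=> HC; have := inv_of HC; rewrite /=.
case: C2 HC => [[[p q] r s]] HC [u1 [u2 [w1 [w2 I]]]].
set S := gunion (cycleG C1) (cycleG (p, q, r, s)).
have vC1 : forall t, t \in qverts C1 -> t \in gV S.
  move=> t; rewrite /S /= mem_cat; case: (C1) => [[[a b] c] d] /= ->; by [].
have vC2 : forall t, t \in [:: p; q; r; s] -> t \in gV S.
  by move=> t ht; rewrite /S /= mem_cat ht orbT.
have sq : q \in gV S by apply: vC2; rewrite !inE eqxx orbT.
have ss : s \in gV S by apply: vC2; rewrite !inE eqxx !orbT.
have noext : forall col, col u1 != col u2 -> col q != col s -> ~ extends S col G.
  move=> col h1 h2 [c' [pc ag]].
  have a1 := ag u1 (vC1 _ (iU1 I)); have a2 := ag u2 (vC1 _ (iU2 I)).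
  have := iF I pc; rewrite a1 a2 => /(_ h1).
  by rewrite (ag q sq) (ag s ss) => /eqP; apply/negP.
have P4 := ipq I; move: P4; rewrite /= !inE !negb_or => /and4P[/and3P[npq npr nps] /andP[nqr nqs] nrs _].
split.
- move=> H [sV sE sI sS sL] [tV tE tI tS tL] nsame.
  have [e1 [e2 [Ge He]]] : exists e1 e2, gE G e1 e2 /\ ~~ gE H e1 e2.
    apply: NNPP => hno; apply: nsame; split.
    + move=> t; apply/idP/idP; first exact: sV.
      move=> /(inb I) [b hb].
      case: (boolP (gE H t b)) => hh; first by case/andP: (sI _ _ hh).
      by exfalso; apply: hno; exists t, b; split.
    + move=> a b; apply/idP/idP; first exact: sE.
      move=> hab; case: (boolP (gE H a b)) => // hh.
      by exfalso; apply: hno; exists a, b; split.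
  have nC : ~~ gE (cycleG C1) e1 e2.
    by apply: contra He => h; apply: tE; rewrite /S /= h.
  have [c [pe cu cq]] := iB I Ge nC.
  have pH : proper_col H c.
    move=> a b hab; apply: pe; first exact: sE.
    apply/negP; rewrite /exc => /orP[] /andP[/eqP ea /eqP eb]; subst a b.
    + by move: He; rewrite hab.
    + by move: He; rewrite sS hab.
  exists c; split.
  + move=> a b hab; apply: pH; exact: (tE a b hab).
  + split; first by exists c; split.
    exact: noext.
- move=> col pcol h1 h2.
  apply: noext.
  + apply: h1; rewrite ?(iU1 I) ?(iU2 I) ?(iUn I) //.
    * exact: (deg_two (iu I) (iN1 I) (iWn I) (iW1 I) (iW2 I)).
    * exact: (deg_two (iu I) (iN2 I) (iWn I) (iW1 I) (iW2 I)).
  + apply: h2; rewrite ?inE ?eqxx ?orbT //.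
    * exact: (deg_two (iu I) (ieq I) npr (ivp I) (ivr I)).
    * exact: (deg_two (iu I) (ies I) npr (ivp I) (ivr I)).
Qed.
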